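(* Let $\mathcal{A}\in\mathbb{C}^{I_{1\ldots N}\times I_{1\ldots N}}$ and let $\mathcal{N}\in\mathbb{C}^{I_{1\ldots N}\times I_{1\ldots N}}$ be a Hermitian positive definite tensor. Put $\tilde{\mathcal{A}}=\mathcal{N}^{1/2}*_N\mathcal{A}*_N\mathcal{N}^{-1/2}$. Then: (i) $\lambda\in\sigma(\mathcal{A})$ if and only if $\lambda\in\sigma(\tilde{\mathcal{A}})$; (ii) $\lambda\in\sigma(\mathcal{A}^{\dagger}_{\mathcal{N},\mathcal{N}})$ if and only if $\lambda\in\sigma(\tilde{\mathcal{A}}^{\dagger})$; (iii) if $\mathcal{A}$ is weighted normal (i.e. $\mathcal{A}^{\#}_{\mathcal{N}\mathcal{N}}*_N\mathcal{A}=\mathcal{A}*_N\mathcal{A}^{\#}_{\mathcal{N}\mathcal{N}}$) and $\lambda\neq0$, then $\lambda\in\sigma(\mathcal{A})$ if and only if $1/\lambda\in\sigma(\mathcal{A}^{\dagger}_{\mathcal{N},\mathcal{N}})$.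
   Context: Write $I_{1\ldots N}$ for $I_1\times\cdots\times I_N$. Einstein product: $(\mathcal{A}*_N\mathcal{B})_{i_1\ldots i_Mj_1\ldots j_L}=\sum_{k_1,\ldots,k_N}a_{i_1\ldots i_Mk_1\ldots k_N}b_{k_1\ldots k_Nj_1\ldots j_L}$ (also when $\mathcal{B}\in\mathbb{C}^{K_{1\ldots N}}$). $\mathcal{A}^H$ is the conjugate transpose. Identity tensor: entry 1 where the two index blocks coincide, 0 otherwise; inverses are with respect to $*_N$. $\mathcal{N}$ is Hermitian positive definite if $\mathcal{N}^H=\mathcal{N}$ and $\mathcal{X}^H*_N\mathcal{N}*_N\mathcal{X}>0$ for all nonzero $\mathcal{X}$; $\mathcal{N}^{1/2}$ is its unique Hermitian positive definite square root and $\mathcal{N}^{-1/2}=(\mathcal{N}^{1/2})^{-1}$. $\sigma(\mathcal{A})$ is the set of $\lambda\in\mathbb{C}$ such that $\mathcal{A}*_N\mathcal{X}=\lambda\mathcal{X}$ for some nonzero $\mathcal{X}\in\mathbb{C}^{I_{1\ldots N}}$. Weighted conjugate transpose: $\mathcal{A}^{\#}_{\mathcal{N}\mathcal{N}}=\mathcal{N}^{-1}*_N\mathcal{A}^H*_N\mathcal{N}$. Weighted Moore-Penrose inverse $\mathcal{A}^{\dagger}_{\mathcal{M},\mathcal{N}}$: the unique $\mathcal{X}$ with $\mathcal{A}*_N\mathcal{X}*_N\mathcal{A}=\mathcal{A}$, $\mathcal{X}*_N\mathcal{A}*_N\mathcal{X}=\mathcal{X}$, $(\mathcal{M}*_N\mathcal{A}*_N\mathcal{X})^H=\mathcal{M}*_N\mathcal{A}*_N\mathcal{X}$,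 $(\mathcal{N}*_N\mathcal{X}*_N\mathcal{A})^H=\mathcal{N}*_N\mathcal{X}*_N\mathcal{A}$; $\mathcal{A}^{\dagger}$ is the case of identity weights. *)

(* Defs.v *)
From HB Require Import structures.
From mathcomp Require Import all_boot all_order all_algebra.
From mathcomp Require Import complex.
From Stdlib Require Import ClassicalEpsilon.
Set Implicit Arguments. Unset Strict Implicit. Unset Printing Implicit Defensive.
Import Order.TTheory GRing.Theory Num.Theory.
Local Open Scope ring_scope.

Section Tensors.
Variable R : rcfType.
Local Notation C := R[i].
Variables (N : nat) (I : 'I_N -> nat).

Definition midx := {dffun forall k : 'I_N, 'I_(I k)}.

Definition tensor := midx -> midx -> C.
Definition tvec := midx -> C.

Definition tmul (A B : tensor) : tensor :=
  fun i j => \sum_(k : midx) A i k * B k j.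
Definition tmulv (A : tensor) (X : tvec) : tvec :=
  fun i => \sum_(k : midx) A i k * X k.

Definition tid : tensor := fun i j => if i == j then 1 else 0.

Definition tH (A : tensor) : tensor := fun i j => (A j i)^*.

(* inverse w.r.t. *_N (unique when it exists) *)
Definition tinv (A : tensor) : tensor :=
  epsilon (inhabits A) (fun X => tmul A X = tid /\ tmul X A = tid).

Definition tquad (M : tensor) (X : tvec) : C :=
  \sum_(i : midx) \sum_(j : midx) (X i)^* * M i j * X j.

Definition herm_pd (M : tensor) : Prop :=
  tH M = M /\ forall X : tvec, X <> (fun _ => 0) -> 0 < tquad M X.

(* the unique Hermitian positive definite square root *)
Definition tsqrt (M : tensor) : tensor :=
  epsilon (inhabits M) (fun S => herm_pd S /\ tmul S S = M).
Definition tisqrt (M : tensor) : tensor := tinv (tsqrt M).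

Definition tspec (A : tensor) (l : C) : Prop :=
  exists X : tvec, X <> (fun _ => 0) /\ tmulv A X = (fun i => l * X i).

Definition wct (M A : tensor) : tensor := tmul (tinv M) (tmul (tH A) M).

(* weighted Moore-Penrose inverse A^dagger_{M,N} (unique) *)
Definition is_wmp (M Nw A X : tensor) : Prop :=
  [/\ tmul A (tmul X A) = A, tmul X (tmul A X) = X,
      tH (tmul M (tmul A X)) = tmul M (tmul A X)
    & tH (tmul Nw (tmul X A)) = tmul Nw (tmul X A)].
Definition wmp (M Nw A : tensor) : tensor :=
  epsilon (inhabits A) (is_wmp M Nw A).
Definition mp (A : tensor) : tensor := wmp tid tid A.

End Tensors.

(* Main.v *)
From HB Require Import structures.
From mathcomp Require Import all_boot all_order all_algebra.
From mathcomp Require Import complex spectral sesquilinear.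
From Stdlib Require Import ClassicalEpsilon FunctionalExtensionality.
Require Import Defs.
Set Implicit Arguments. Unset Strict Implicit. Unset Printing Implicit Defensive.
Import Order.TTheory GRing.Theory Num.Theory.
Local Open Scope ring_scope.
Local Open Scope sesquilinear_scope.

Section Mat.
Variable C : numClosedFieldType.

Lemma ctM m n p (A : 'M[C]_(m,n)) (B : 'M[C]_(n,p)) : (A *m B)^t* = B^t* *m A^t*.
Proof. by rewrite trmx_mul map_mxM. Qed.
Lemma ct1 n : (1%:M : 'M[C]_n)^t* = 1%:M.
Proof. by rewrite trmx1 map_mx1. Qed.
Lemma ctV n (A : 'M[C]_n) : (invmx A)^t* = invmx (A^t*).
Proof. by rewrite trmx_inv map_invmx. Qed.
Lemma ctB m n (A B : 'M[C]_(m,n)) : (A - B)^t* = A^t* - B^t*.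
Proof. by apply/matrixP=> i j; rewrite !mxE rmorphB. Qed.
Lemma ctZ m n (a : C) (A : 'M[C]_(m,n)) : (a *: A)^t* = a^* *: A^t*.
Proof. by apply/matrixP=> i j; rewrite !mxE rmorphM. Qed.

Lemma ctmx_eq0 m p (Z : 'M[C]_(m,p)) : Z^t* *m Z = 0 -> Z = 0.
Proof.
move=> H; apply/matrixP=> i j; rewrite mxE.
have /matrixP/(_ j j) := H; rewrite !mxE => /psumr_eq0P H2.
have /(_ i isT) : (forall k : 'I_m, true -> (Z^t*) j k * Z k j = 0).
  by apply: H2 => k _; rewrite !mxE mulrC mul_conjC_ge0.
by rewrite !mxE mulrC => /eqP; rewrite mul_conjC_eq0 => /eqP.
Qed.

Lemma diag_quad_gt0 n (e : 'rV[C]_n) (w : 'cV[C]_n) :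
  (forall j, 0 < e 0 j) -> w != 0 -> 0 < (w^t* *m diag_mx e *m w) 0 0.
Proof.
move=> He wn0; rewrite mul_mx_diag mxE.
have ge : forall j : 'I_n, true -> 0 <= (\matrix_(i, j) ((w^t*) i j * e 0 j)) 0 j * w j 0.
  move=> j _; rewrite !mxE mulrAC; apply: mulr_ge0; last exact: ltW.
  by rewrite mulrC mul_conjC_ge0.
rewrite lt_def sumr_ge0 // andbT; apply/eqP => /psumr_eq0P H.
move: wn0; apply/negP; rewrite negbK; apply/eqP/matrixP => j k.
rewrite (ord1 k) mxE.
have := H ge j isT ; rewrite !mxE mulrAC => /eqP.
by rewrite mulf_eq0 (gt_eqF (He j)) orbF mulrC mul_conjC_eq0 => /eqP.
Qed.

Lemma ct0 m n : (0 : 'M[C]_(m,n))^t* = 0.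
Proof. by apply/matrixP=> i j; rewrite !mxE rmorph0. Qed.

Definition hpd n (M : 'M[C]_n) :=
  M^t* = M /\ forall v : 'cV_n, v != 0 -> 0 < (v^t* *m M *m v) 0 0.

Lemma hpd_unit n (M : 'M[C]_n) : hpd M -> M \in unitmx.
Proof.
move=> [HM HP]; rewrite -row_free_unit; apply: inj_row_free => v vM0.
case: (eqVneq (v^t*) 0) => [c0|cn0].
  by rewrite -[v]trmxCK c0 ct0.
have := HP _ cn0; rewrite trmxCK vM0 mul0mx mxE ltxx //.
Qed.

Lemma hpd_sqrt n (M : 'M[C]_n) : hpd M -> exists S, hpd S /\ S *m S = M.
Proof.
move=> [HM HP].
have nM : M \is normalmx by apply/normalmxP; rewrite HM.
have /orthomx_spectralP EM := nM.
have PU := @spectral_unitarymx _ _ M.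
rewrite invmx_unitary // in EM.
move: EM PU; set P := spectralmx M; set d := spectral_diag M => EM PU.
have PP : P *m P^t* = 1%:M by apply/unitarymxP.
have PP' : P^t* *m P = 1%:M by rewrite -[P^t*]mul1mx mulmxKtV.
have dpos : forall j, 0 < d 0 j.
  move=> j; pose v := P^t* *m delta_mx j (0 : 'I_1).
  have vn0 : v != 0.
    apply/eqP => v0; have : P *m v = delta_mx j 0 by rewrite mulmxA PP mul1mx.
    rewrite v0 mulmx0 => /matrixP/(_ j 0); rewrite !mxE !eqxx /= => /eqP.
    by rewrite eq_sym oner_eq0.
  have := HP v vn0; rewrite /v EM !ctM trmxCK !mulmxA mulmxtVK // -[_ *m P *m P^t*]mulmxA PP mulmx1.
  have -> : (delta_mx j 0 : 'cV[C]_n)^t* = delta_mx 0 j.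
    by apply/matrixP=> a b; rewrite !mxE rmorph_nat andbC.
  by rewrite -rowE row_diag_mx -scalemxAl mul_delta_mx !mxE !eqxx mulr1.
pose e := \row_j sqrtC (d 0 j).
have epos : forall j, 0 < e 0 j by move=> j; rewrite mxE sqrtC_gt0.
have De : (diag_mx e)^t* = diag_mx e.
  apply/matrixP => a b; rewrite !mxE; case: (eqVneq a b) => [->|ne].
    by rewrite geC0_conj // sqrtC_ge0 ltW.
  by rewrite !mulr0n rmorph0.
exists (P^t* *m diag_mx e *m P); split; first split.
- by rewrite !ctM trmxCK De mulmxA.
- move=> v vn0.
  have wn0 : P *m v != 0.
    apply: contraNneq vn0 => Pv0.
    by rewrite -[v]mul1mx -PP' -mulmxA Pv0 mulmx0.
  have := diag_quad_gt0 epos wn0.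
  by rewrite ctM !mulmxA.
- rewrite EM !mulmxA mulmxtVK // -[P^t* *m diag_mx e *m _]mulmxA mulmx_diag; congr (_ *m diag_mx _ *m _).
  by apply/rowP => j; rewrite !mxE -expr2 sqrtCK.
Qed.


Definition is_wmpm n (M W A X : 'M[C]_n) :=
  [/\ A *m (X *m A) = A, X *m (A *m X) = X,
      (M *m (A *m X))^t* = M *m (A *m X)
    & (W *m (X *m A))^t* = W *m (X *m A)].

Definition specm n (A : 'M[C]_n) l := exists v : 'cV_n, v != 0 /\ A *m v = l *: v.

Lemma gram_unit r n (K : 'M[C]_(r,n)) : row_free K -> K *m K^t* \in unitmx.
Proof.
move=> fK; rewrite -row_free_unit; apply: inj_row_free => v H.
have /ctmx_eq0 : ((v *m K)^t*)^t* *m (v *m K)^t* = 0.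
  by rewrite trmxCK ctM mulmxA -(mulmxA v) H mul0mx.
move=> /(congr1 (fun Z => Z^t*)); rewrite trmxCK ct0 => /eqP.
by rewrite mulmx_free_eq0 // => /eqP.
Qed.

Lemma mp_exists_fr n r (F : 'M[C]_(n,r)) (G : 'M[C]_(r,n)) :
  row_free G -> row_free (F^t*) -> exists X, is_wmpm 1%:M 1%:M (F *m G) X.
Proof.
move=> fG fF.
have UG := gram_unit fG.
have UF := gram_unit fF; rewrite trmxCK in UF.
set X := G^t* *m invmx (G *m G^t*) *m invmx (F^t* *m F) *m F^t*.
have BX : F *m G *m X = F *m invmx (F^t* *m F) *m F^t*.
  by rewrite /X !mulmxA -[F *m G *m G^t*]mulmxA mulmxK.
have XB : X *m (F *m G) = G^t* *m invmx (G *m G^t*) *m G.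
  by rewrite /X !mulmxA -[_ *m F^t* *m F]mulmxA mulmxKV.
exists X; split; rewrite ?mul1mx.
- by rewrite mulmxA BX !mulmxA -[_ *m F^t* *m F]mulmxA mulmxKV.
- by rewrite BX /X !mulmxA -[_ *m F^t* *m F]mulmxA mulmxK.
- by rewrite BX !ctM trmxCK ctV ctM trmxCK mulmxA.
- by rewrite XB !ctM trmxCK ctV ctM trmxCK mulmxA.
Qed.

Lemma mp_exists n (B : 'M[C]_n) : exists X, is_wmpm 1%:M 1%:M B X.
Proof.
have fF : row_free ((col_base B)^t*).
  by rewrite /row_free mxrank_map mxrank_tr; exact: col_base_full.
by have := mp_exists_fr (row_base_free B) fF; rewrite mulmx_base.
Qed.

Lemma mp_unique n (B X Y : 'M[C]_n) :
  is_wmpm 1%:M 1%:M B X -> is_wmpm 1%:M 1%:M B Y -> X = Y.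
Proof.
rewrite /is_wmpm !mul1mx => -[BXB XBX hBX hXB] [BYB YBY hBY hYB].
have EBX : B *m X = B *m Y.
  have -> : B *m X = (B *m Y) *m (B *m X) by rewrite mulmxA -(mulmxA B Y B) BYB.
  rewrite -[in LHS]hBY -[in LHS]hBX -ctM mulmxA -(mulmxA B X B) BXB hBY //.
have EXB : X *m B = Y *m B.
  have -> : X *m B = (X *m B) *m (Y *m B) by rewrite -!mulmxA BYB.
  rewrite -[in LHS]hXB -[in LHS]hYB -ctM -!mulmxA BXB hYB //.
by rewrite -XBX EBX mulmxA EXB -mulmxA YBY.
Qed.


Lemma specm_sim n (S A : 'M[C]_n) l : S \in unitmx ->
  specm A l <-> specm (S *m (A *m invmx S)) l.
Proof.
move=> US; split.
- move=> [v [vn0 Av]]; exists (S *m v); split.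
    apply: contraNneq vn0 => Sv0.
    by rewrite -[v]mul1mx -(mulVmx US) -mulmxA Sv0 mulmx0.
  by rewrite !mulmxA mulmxKV // -mulmxA Av scalemxAr.
- move=> [v [vn0 Av]]; exists (invmx S *m v); split.
    apply: contraNneq vn0 => Sv0.
    by rewrite -[v]mul1mx -(mulmxV US) -mulmxA Sv0 mulmx0.
  have := congr1 (mulmx (invmx S)) Av.
  by rewrite !mulmxA mulVmx // mul1mx scalemxAr.
Qed.

Lemma herm_conj n (S Y : 'M[C]_n) : S \in unitmx -> S^t* = S ->
  ((S *m S) *m Y)^t* = (S *m S) *m Y <->
  (S *m (Y *m invmx S))^t* = S *m (Y *m invmx S).
Proof.
move=> US HS; have HSi : (invmx S)^t* = invmx S by rewrite ctV HS.
rewrite !ctM HS HSi; split => H.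
- have := congr1 (fun T => invmx S *m T *m invmx S) H.
  by rewrite !mulmxA mulmxK // mulVmx // mul1mx.
- have := congr1 (fun T => S *m T *m S) H.
  by rewrite !mulmxA mulmxV // mul1mx mulmxKV // => <-; rewrite mulmxKV.
Qed.

Lemma wmp_transport n (S A X : 'M[C]_n) : hpd S ->
  is_wmpm (S *m S) (S *m S) A X <->
  is_wmpm 1%:M 1%:M (S *m (A *m invmx S)) (S *m (X *m invmx S)).
Proof.
move=> hS; have US := hpd_unit hS; have HS := hS.1.
have cj : forall Y Z : 'M[C]_n, S *m (Y *m invmx S) *m (S *m (Z *m invmx S)) = S *m ((Y *m Z) *m invmx S).
  by move=> Y Z; rewrite !mulmxA mulmxKV.
have cji : forall Y Z : 'M[C]_n, S *m (Y *m invmx S) = S *m (Z *m invmx S) -> Y = Z.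
  move=> Y Z /(congr1 (fun T => invmx S *m T *m S)).
  by rewrite !mulmxA mulVmx // !mul1mx !mulmxKV.
rewrite /is_wmpm !mul1mx !cj.
split => -[h1 h2 h3 h4]; split.
- by rewrite h1.
- by rewrite h2.
- exact/(herm_conj _ US HS).
- exact/(herm_conj _ US HS).
- exact: cji.
- exact: cji.
- exact/(herm_conj _ US HS).
- exact/(herm_conj _ US HS).
Qed.


Lemma normal_PQ n (B X : 'M[C]_n) : B^t* *m B = B *m B^t* ->
  is_wmpm 1%:M 1%:M B X -> B *m X = X *m B.
Proof.
move=> nB; rewrite /is_wmpm !mul1mx => -[BXB XBX hP hQ].
have ker : forall Y : 'M_n, B *m Y = 0 -> B^t* *m Y = 0.
  move=> Y BY0; apply: ctmx_eq0.
  have -> : (B^t* *m Y)^t* *m (B^t* *m Y) = (B *m Y)^t* *m (B *m Y).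
    by rewrite !ctM trmxCK !mulmxA -[Y^t* *m B *m B^t*]mulmxA -nB !mulmxA.
  by rewrite BY0 ct0 mul0mx.
have ker' : forall Y : 'M_n, B^t* *m Y = 0 -> B *m Y = 0.
  move=> Y BY0; apply: ctmx_eq0.
  have -> : (B *m Y)^t* *m (B *m Y) = (B^t* *m Y)^t* *m (B^t* *m Y).
    by rewrite !ctM trmxCK !mulmxA -[Y^t* *m B^t* *m B]mulmxA nB !mulmxA.
  by rewrite BY0 ct0 mul0mx.
have QB : X *m B *m B = B.
  have h : B *m (1%:M - X *m B) = 0 by rewrite mulmxBr mulmx1 BXB subrr.
  have := congr1 (fun T => T^t*) (ker _ h).
  rewrite ctM trmxCK ctB ct1 hQ ct0 mulmxBl mul1mx => /eqP.
  by rewrite subr_eq0 => /eqP.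
have BP : B *m (B *m X) = B.
  have h : (1%:M - B *m X) *m B = 0 by rewrite mulmxBl mul1mx -mulmxA BXB subrr.
  have := congr1 (fun T => T^t*) h; rewrite ctM ctB ct1 hP ct0 => /ker' h'.
  move: h'; rewrite mulmxBr mulmx1 => /eqP; rewrite subr_eq0 => /eqP //.
have P1 : B *m X = X *m B *m (B *m X) by rewrite -{1}QB !mulmxA.
have P2 : X *m B = X *m B *m (B *m X) by rewrite -{1}BP !mulmxA.
by rewrite {1}P1 -P2.
Qed.

Lemma normal_mp_spec n (B X : 'M[C]_n) l : B^t* *m B = B *m B^t* ->
  is_wmpm 1%:M 1%:M B X -> l != 0 -> specm B l <-> specm X l^-1.
Proof.
move=> nB hX l0; have PQ := normal_PQ nB hX.
move: hX; rewrite /is_wmpm !mul1mx => -[BXB XBX hP hQ].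
split => -[v [vn0 Hv]]; exists v; split => //.
- have ev : v = B *m (l^-1 *: v) by rewrite -scalemxAr Hv scalerA mulVf // scale1r.
  have Pv : B *m X *m v = v by rewrite {1}ev !mulmxA -(mulmxA B X B) BXB -ev.
  by rewrite {1}ev mulmxA -PQ -scalemxAr Pv.
- have ev : v = l *: (X *m v) by rewrite Hv scalerA mulfV // scale1r.
  have Qv : X *m B *m v = v.
    by rewrite {1}ev scalemxAr !mulmxA -(mulmxA X B X) XBX -scalemxAr -ev.
  by rewrite {1}ev -scalemxAr mulmxA PQ Qv.
Qed.

End Mat.

Section Bridge.
Variable R : rcfType.
Local Notation C := R[i].
Variables (N : nat) (I : 'I_N -> nat).
Local Notation T := (midx I).
Local Notation n := #|T|.
Local Notation tens := (tensor R I).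

Lemma sumE (F : T -> C) : \sum_(k : T) F k = \sum_(a < n) F (enum_val a).
Proof.
rewrite (reindex (@enum_val T predT)) //.
by exists enum_rank => x _; [exact: enum_valK | exact: enum_rankK].
Qed.

Definition tom (A : tens) : 'M[C]_n := \matrix_(a, b) A (enum_val a) (enum_val b).
Definition ofm (M : 'M[C]_n) : tens := fun x y => M (enum_rank x) (enum_rank y).
Definition tov (X : tvec R I) : 'cV[C]_n := \col_a X (enum_val a).
Definition ofv (v : 'cV[C]_n) : tvec R I := fun x => v (enum_rank x) 0.

Lemma tomK A : ofm (tom A) = A.
Proof. by apply: functional_extensionality => x; apply: functional_extensionality => y; rewrite /ofm mxE !enum_rankK. Qed.
Lemma ofmK M : tom (ofm M) = M.
Proof. by apply/matrixP => a b; rewrite mxE /ofm !enum_valK. Qed.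
Lemma tom_inj A B : tom A = tom B -> A = B.
Proof. by move=> h; rewrite -(tomK A) h tomK. Qed.
Lemma tovK X : ofv (tov X) = X.
Proof. by apply: functional_extensionality => x; rewrite /ofv mxE enum_rankK. Qed.
Lemma ofvK v : tov (ofv v) = v.
Proof. by apply/matrixP => a b; rewrite mxE /ofv enum_valK (ord1 b). Qed.

Lemma tom_mul A B : tom (tmul A B) = tom A *m tom B.
Proof. by apply/matrixP => a b; rewrite !mxE /tmul sumE; apply: eq_bigr => k _; rewrite !mxE. Qed.
Lemma tom_id : tom (@tid R N I) = 1%:M.
Proof. by apply/matrixP => a b; rewrite !mxE /tid (inj_eq enum_val_inj); case: eqP. Qed.
Lemma tom_H A : tom (tH A) = (tom A)^t*.
Proof. by apply/matrixP => a b; rewrite !mxE. Qed.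
Lemma tov_mul A X : tov (tmulv A X) = tom A *m tov X.
Proof. by apply/matrixP => a b; rewrite !mxE /tmulv sumE; apply: eq_bigr => k _; rewrite !mxE. Qed.

Lemma tov0 X : tov X = 0 <-> X = (fun _ => 0).
Proof.
split => [h|->].
  by rewrite -(tovK X) h; apply: functional_extensionality => x; rewrite /ofv mxE.
by apply/matrixP => a b; rewrite !mxE.
Qed.

Lemma tspecE A l : tspec A l <-> specm (tom A) l.
Proof.
split.
- move=> [X [Xn0 HX]]; exists (tov X); split.
    by apply/eqP => /tov0.
  rewrite -tov_mul HX; apply/matrixP => a b; rewrite !mxE //.
- move=> [v [vn0 Hv]]; exists (ofv v); split.
    by move=> h; move: vn0; rewrite -(ofvK v) (proj2 (tov0 _) h) eqxx.
  rewrite -[LHS]tovK tov_mul ofvK Hv; apply: functional_extensionality => x.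
  by rewrite /ofv !mxE.
Qed.

Lemma tquadE M X : tquad M X = ((tov X)^t* *m tom M *m tov X) 0 0.
Proof.
rewrite /tquad mxE sumE; under eq_bigr => a _ do rewrite sumE.
under [RHS]eq_bigr => j _ do rewrite mxE big_distrl /=.
rewrite exchange_big /=; apply: eq_bigr => a _; apply: eq_bigr => b _.
by rewrite !mxE.
Qed.

Lemma herm_pdE M : herm_pd M <-> hpd (tom M).
Proof.
rewrite /herm_pd /hpd; split => -[h1 h2]; split.
- by rewrite -tom_H h1.
- move=> v vn0; rewrite -(ofvK v) -tquadE; apply: h2 => h.
  by move: vn0; rewrite -(ofvK v) (proj2 (tov0 _) h) eqxx.
- by apply: tom_inj; rewrite tom_H.
- move=> X Xn0; rewrite tquadE; apply: h2; apply/eqP => /tov0; exact: Xn0.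
Qed.

Lemma tom_inv A : tom A \in unitmx -> tom (tinv A) = invmx (tom A).
Proof.
move=> UA.
have : tmul A (tinv A) = @tid R N I /\ tmul (tinv A) A = @tid R N I.
  apply: (epsilon_spec (inhabits A) (fun X => tmul A X = @tid R N I /\ tmul X A = @tid R N I)).
  exists (ofm (invmx (tom A))); split; apply: tom_inj;
    by rewrite tom_mul ofmK tom_id ?mulmxV ?mulVmx.
move=> [h _]; have := congr1 tom h; rewrite tom_mul tom_id => h'.
by rewrite -[tom (tinv A)]mul1mx -(mulVmx UA) -mulmxA h' mulmx1.
Qed.

Lemma tsqrtP (M : tens) : herm_pd M -> herm_pd (tsqrt M) /\ tmul (tsqrt M) (tsqrt M) = M.
Proof.
move=> /herm_pdE /hpd_sqrt [S [hS SS]].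
apply: (epsilon_spec (inhabits M) (fun S : tens => herm_pd S /\ tmul S S = M)).
exists (ofm S); split; first by apply/herm_pdE; rewrite ofmK.
by apply: tom_inj; rewrite tom_mul ofmK.
Qed.

Lemma is_wmpE (M W A X : tens) :
  is_wmp M W A X <-> is_wmpm (tom M) (tom W) (tom A) (tom X).
Proof.
rewrite /is_wmp /is_wmpm -!tom_mul -!tom_H.
split => -[h1 h2 h3 h4]; split; try by rewrite ?h1 ?h2 ?h3 ?h4.
all: exact: tom_inj.
Qed.

End Bridge.

Theorem theorem4p7 (R : rcfType) (N : nat) (I : 'I_N -> nat)
    (A Nw : tensor R I) :
  herm_pd Nw ->
  let At := tmul (tsqrt Nw) (tmul A (tisqrt Nw)) in
  (forall l : R[i], tspec A l <-> tspec At l) /\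
  (forall l : R[i], tspec (wmp Nw Nw A) l <-> tspec (mp At) l) /\
  (tmul (wct Nw A) A = tmul A (wct Nw A) ->
   forall l : R[i], l != 0 -> (tspec A l <-> tspec (wmp Nw Nw A) l^-1)).
Proof.
move=> hN At.
have [hS SS] := tsqrtP hN.
have hSm : hpd (tom (tsqrt Nw)) := (herm_pdE _).1 hS.
have US := hpd_unit hSm.
have HS := hSm.1.
have HSi : (invmx (tom (tsqrt Nw)))^t* = invmx (tom (tsqrt Nw)) by rewrite ctV HS.
have HN : tom Nw = tom (tsqrt Nw) *m tom (tsqrt Nw) by rewrite -{1}SS tom_mul.
have Hi : tom (tisqrt Nw) = invmx (tom (tsqrt Nw)) by rewrite /tisqrt tom_inv.
have HAt : tom At = tom (tsqrt Nw) *m (tom A *m invmx (tom (tsqrt Nw))).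
  by rewrite /At !tom_mul Hi.
move: HAt US HS HSi HN hSm; set Sm := tom (tsqrt Nw) => HAt US HS HSi HN hSm.
have part1 : forall l, tspec A l <-> tspec At l.
  move=> l; split => H.
  - apply/tspecE; rewrite HAt; exact: (proj1 (specm_sim _ _ US) (proj1 (tspecE _ _) H)).
  - apply/tspecE; apply: (proj2 (specm_sim _ _ US)); rewrite -HAt; exact: (proj1 (tspecE _ _) H).
have hY : is_wmp (@tid R N I) (@tid R N I) At (mp At).
  rewrite /mp /wmp.
  apply: (epsilon_spec (inhabits At) (is_wmp (@tid R N I) (@tid R N I) At)).
  have [X0 hX0] := mp_exists (tom At).
  by exists (ofm X0); apply/is_wmpE; rewrite ofmK tom_id.
have hYm : is_wmpm 1%:M 1%:M (tom At) (tom (mp At)).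
  by move/is_wmpE: hY; rewrite tom_id.
have hW : is_wmp Nw Nw A (wmp Nw Nw A).
  apply: (epsilon_spec (inhabits A) (is_wmp Nw Nw A)).
  exists (ofm (invmx Sm *m (tom (mp At) *m Sm))).
  apply/is_wmpE; rewrite ofmK HN; apply/(wmp_transport _ _ hSm); rewrite -HAt.
  have -> : Sm *m ((invmx Sm *m (tom (mp At) *m Sm)) *m invmx Sm) = tom (mp At).
    by rewrite !mulmxA mulmxV // mul1mx mulmxK.
  exact: hYm.
have EW : Sm *m (tom (wmp Nw Nw A) *m invmx Sm) = tom (mp At).
  apply: (mp_unique _ hYm); rewrite HAt; apply/(wmp_transport _ _ hSm).
  by rewrite -HN; apply/is_wmpE.
have part2 : forall l, tspec (wmp Nw Nw A) l <-> tspec (mp At) l.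
  move=> l; split => H.
  - apply/tspecE; rewrite -EW; exact: (proj1 (specm_sim _ _ US) (proj1 (tspecE _ _) H)).
  - apply/tspecE; apply: (proj2 (specm_sim _ _ US)); rewrite EW; exact: (proj1 (tspecE _ _) H).
split => //; split => // hn l l0.
have UN : tom Nw \in unitmx by rewrite HN unitmx_mul US.
have iN : invmx (tom Nw) = invmx Sm *m invmx Sm.
  by rewrite -[RHS](mulKmx UN) HN !mulmxA !mulmxK.
have hn' := congr1 (@tom R N I) hn.
rewrite /wct !tom_mul (tom_inv UN) tom_H iN HN in hn'.
have h0 := congr1 (fun T => Sm *m T *m invmx Sm) hn'.
rewrite /= !mulmxA (mulmxV US) mul1mx (mulmxK US) in h0.
have nAt : (tom At)^t* *m tom At = tom At *m (tom At)^t*.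
  rewrite HAt !ctM HS HSi !mulmxA.
  exact: h0.
have h := normal_mp_spec nAt hYm l0.
split => H.
- apply/part2/tspecE/h/tspecE; exact/part1.
- apply/part1/tspecE/h/tspecE; exact/part2.
Qed.
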